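(* Let $\alpha : I \to \mathbb{E}^4$ be an arclength parameterized curve (defined on an open interval $I$) with non-zero curvatures $\kappa_1,\kappa_2,\kappa_3$. Suppose two of its curvatures are constant. Then $\alpha$ is congruent to a rectifying curve if and only if one of the following holds: (i) $\kappa_1(s)=\kappa_1$, $\kappa_2(s)=\kappa_2$ are constants and $\kappa_3(s)=\pm \dfrac{1}{\sqrt{-s^2-2cs+c_1}}$ for some $\kappa_1,\kappa_2\in\mathbb{R}$ with $\kappa_1,\kappa_2>0$ and some $c,c_1\in\mathbb{R}$, where $-s^2-2cs+c_1>0$; (ii) $\kappa_2(s)=\kappa_2$, $\kappa_3(s)=\kappa_3$ are constants and $\kappa_1(s)=c_1\dfrac{\sin(\kappa_3 s+c_2)}{s+c}$ for some $\kappa_2>0$, $\kappa_3\in\mathbb{R}\setminus\{0\}$, $c,c_2\in\mathbb{R}$ and $c_1\in\mathbb{R}\setminus\{0\}$; (iii) $\kappa_1(s)=\kappa_1$, $\kappa_3(s)=\kappa_3$ are constants and $\kappa_2(s)=c_2(s+c)\sec(\kappa_3 s+c_1)$ for some $\kappa_1>0$, $\kappa_3\in\mathbb{R}\setminus\{0\}$, $c,c_1\in\mathbb{R}$ and $c_2\in\mathbb{R}\setminus\{0\}$.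
   Context: For an arclength parameterized curve $\alpha$ in $\mathbb{E}^4$ (sufficiently differentiable) one has the Frenet frame $T,N,B_1,B_2$ (orthonormal) with curvatures $\kappa_1,\kappa_2,\kappa_3$ satisfying $T'=\kappa_1 N$, $N'=-\kappa_1 T+\kappa_2 B_1$, $B_1'=-\kappa_2 N+\kappa_3 B_2$, $B_2'=-\kappa_3 B_1$, where $\kappa_1,\kappa_2>0$. ''Non-zero curvatures'' means no curvature is identically zero. A curve $\alpha$ is a rectifying curve if there is a fixed point $p$ such that for all $s$, $\langle \alpha(s)-p, N(s)\rangle = 0$, i.e. the orthogonal complement of $N(s)$ (through $\alpha(s)$) contains $p$. *)

(* Defs.v *)
From HB Require Import structures.
From mathcomp Require Import all_boot all_order all_algebra.
From mathcomp Require Import all_classical all_reals all_analysis.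
Set Implicit Arguments. Unset Strict Implicit. Unset Printing Implicit Defensive.
Import Order.TTheory GRing.Theory Num.Theory.
Import numFieldNormedType.Exports.
Local Open Scope classical_set_scope.
Local Open Scope ring_scope.

Definition dot4 {R : realType} (u v : 'rV[R]_4) : R :=
  \sum_(i < 4) u ord0 i * v ord0 i.

Definition open_interval {R : realType} (I : set R) : Prop :=
  [/\ open I, is_interval I & I !=set0].

Definition frenet_frame {R : realType} (I : set R)
    (alpha T N B1 B2 : R -> 'rV[R]_4) (k1 k2 k3 : R -> R) : Prop :=
  forall s, I s ->
    (is_derive s 1 alpha (T s)
     /\ is_derive s 1 T (k1 s *: N s)
     /\ is_derive s 1 N (- k1 s *: T s + k2 s *: B1 s)
     /\ is_derive s 1 B1 (- k2 s *: N s + k3 s *: B2 s)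
     /\ is_derive s 1 B2 (- k3 s *: B1 s))
    /\ (dot4 (T s) (T s) = 1 /\ dot4 (N s) (N s) = 1
        /\ dot4 (B1 s) (B1 s) = 1 /\ dot4 (B2 s) (B2 s) = 1
        /\ dot4 (T s) (N s) = 0 /\ dot4 (T s) (B1 s) = 0
        /\ dot4 (T s) (B2 s) = 0 /\ dot4 (N s) (B1 s) = 0
        /\ dot4 (N s) (B2 s) = 0 /\ dot4 (B1 s) (B2 s) = 0)
    /\ (0 < k1 s /\ 0 < k2 s)
    /\ (derivable k1 s 1 /\ derivable k2 s 1 /\ derivable k3 s 1).

Definition rectifying {R : realType} (I : set R) (beta : R -> 'rV[R]_4) : Prop :=
  exists (T N B1 B2 : R -> 'rV[R]_4) (k1 k2 k3 : R -> R),
    frenet_frame I beta T N B1 B2 k1 k2 k3 /\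
    exists p : 'rV[R]_4, forall s, I s -> dot4 (beta s - p) (N s) = 0.

Definition congruent {R : realType} (I : set R) (alpha beta : R -> 'rV[R]_4) : Prop :=
  exists (Q : 'M[R]_4) (b : 'rV[R]_4),
    Q *m Q^T = 1%:M /\ forall s, I s -> beta s = alpha s *m Q + b.

(* Main.v *)
Require Import Defs.
From HB Require Import structures.
From mathcomp Require Import all_boot all_order all_algebra.
From mathcomp Require Import all_classical all_reals all_analysis.
From mathcomp Require Import ring lra.
Import Order.TTheory GRing.Theory Num.Theory.
Import numFieldNormedType.Exports.
Local Open Scope classical_set_scope.
Local Open Scope ring_scope.
Set Implicit Arguments. Unset Strict Implicit.



Section Aux.
Variable R : realType.
Implicit Types u v w : 'rV[R]_4.

Lemma dot4C u v : dot4 u v = dot4 v u.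
Proof. by apply: eq_bigr => i _; rewrite mulrC. Qed.
Lemma dot4Dl u v w : dot4 (u + v) w = dot4 u w + dot4 v w.
Proof. by rewrite /dot4 -big_split; apply: eq_bigr => i _; rewrite mxE mulrDl. Qed.
Lemma dot4Zl a u w : dot4 (a *: u) w = a * dot4 u w.
Proof. by rewrite /dot4 mulr_sumr; apply: eq_bigr => i _; rewrite mxE mulrA. Qed.
Lemma dot4Nl u w : dot4 (- u) w = - dot4 u w.
Proof. by rewrite -scaleN1r dot4Zl mulN1r. Qed.
Lemma dot4Bl u v w : dot4 (u - v) w = dot4 u w - dot4 v w.
Proof. by rewrite dot4Dl dot4Nl. Qed.
Lemma dot4Dr u v w : dot4 w (u + v) = dot4 w u + dot4 w v.
Proof. by rewrite dot4C dot4Dl !(dot4C w). Qed.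
Lemma dot4Zr a u w : dot4 w (a *: u) = a * dot4 w u.
Proof. by rewrite dot4C dot4Zl dot4C. Qed.
Lemma dot4Nr u w : dot4 w (- u) = - dot4 w u.
Proof. by rewrite dot4C dot4Nl dot4C. Qed.
Lemma dot4Br u v w : dot4 w (u - v) = dot4 w u - dot4 w v.
Proof. by rewrite dot4Dr dot4Nr. Qed.
Lemma dot40l w : dot4 0 w = 0.
Proof. by rewrite /dot4 big1 // => i _; rewrite mxE mul0r. Qed.
Lemma dot4_ge0 u : 0 <= dot4 u u.
Proof. by rewrite /dot4 sumr_ge0 // => i _; rewrite -expr2 sqr_ge0. Qed.
Lemma dot4_eq0 u : dot4 u u = 0 -> u = 0.
Proof.
move=> /eqP; rewrite /dot4 psumr_eq0 => [/allP H|i _]; last by rewrite -expr2 sqr_ge0.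
apply/rowP => i; rewrite mxE; have := H i (mem_index_enum i).
by rewrite -expr2 sqrf_eq0 => /eqP.
Qed.

Lemma dot4_mx u v : dot4 u v = (u *m v^T) ord0 ord0.
Proof. by rewrite /dot4 mxE; apply: eq_bigr => i _; rewrite mxE. Qed.

Lemma dot4_orth (Q : 'M[R]_4) u v : Q *m Q^T = 1%:M -> dot4 (u *m Q) (v *m Q) = dot4 u v.
Proof.
move=> HQ; rewrite !dot4_mx trmx_mul mulmxA -(mulmxA u) HQ mulmx1 //.
Qed.

Lemma comp_is_derive (f : R -> 'rV[R]_4) df s i :
  is_derive s (1:R) f df -> is_derive s (1:R) (fun t => f t ord0 i) (df ord0 i).
Proof.
move=> [d <-]; have := d; move/derivable_mxP => /(_ ord0 i) di.
rewrite derive_mx // mxE; exact: derivableP.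
Qed.

Lemma dot4_is_derive (f g : R -> 'rV[R]_4) df dg s :
  is_derive s (1:R) f df -> is_derive s (1:R) g dg ->
  is_derive s (1:R) (fun t => dot4 (f t) (g t)) (dot4 df (g s) + dot4 (f s) dg).
Proof.
move=> hf hg.
have -> : (fun t => dot4 (f t) (g t)) = \sum_(i < 4) (fun t => f t ord0 i * g t ord0 i).
  by apply: funext => t; rewrite fct_sumE.
have -> : dot4 df (g s) + dot4 (f s) dg = \sum_(i < 4) (f s ord0 i *: dg ord0 i + g s ord0 i *: df ord0 i).
  rewrite /dot4 -big_split; apply: eq_bigr => i _ /=; rewrite /GRing.scale /=; ring.
apply: is_derive_sum => i.
have := @is_deriveM R R (fun t => f t ord0 i) (fun t => g t ord0 i) s 1 _ _ (@comp_is_derive _ _ _ i hf) (@comp_is_derive _ _ _ i hg).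
by [].
Qed.

End Aux.



Section Calc.
Variable R : realType.
Implicit Types f g : R -> R.

Lemma DM f g df dg s : is_derive s (1:R) f df -> is_derive s (1:R) g dg ->
  is_derive s (1:R) (fun t => f t * g t) (df * g s + f s * dg).
Proof.
move=> hf hg.
have H : is_derive s (1:R) (fun t => f t * g t) (f s *: dg + g s *: df) := is_deriveM hf hg.
apply: (is_derive_eq H).
by rewrite /GRing.scale /=; ring.
Qed.

Lemma DD f g df dg s : is_derive s (1:R) f df -> is_derive s (1:R) g dg ->
  is_derive s (1:R) (fun t => f t + g t) (df + dg).
Proof. by move=> hf hg; have H := is_deriveD hf hg; exact: H. Qed.

Lemma DB f g df dg s : is_derive s (1:R) f df -> is_derive s (1:R) g dg ->
  is_derive s (1:R) (fun t => f t - g t) (df - dg).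
Proof. by move=> hf hg; have H := is_deriveB hf hg; exact: H. Qed.

Lemma DC (c s : R) : is_derive s (1:R) (fun _ => c) 0.
Proof. exact: is_derive_cst. Qed.

Lemma DI (s : R) : is_derive s (1:R) (fun t => t) 1.
Proof. exact: is_derive_id. Qed.

Lemma Dsin f df s : is_derive s (1:R) f df ->
  is_derive s (1:R) (fun t => sin (f t)) (cos (f s) * df).
Proof. by move=> hf; have H := @is_derive1_comp R sin f s _ _ (is_derive_sin (f s)) hf; exact: H. Qed.

Lemma Dcos f df s : is_derive s (1:R) f df ->
  is_derive s (1:R) (fun t => cos (f t)) (- sin (f s) * df).
Proof. by move=> hf; have H := @is_derive1_comp R cos f s _ _ (is_derive_cos (f s)) hf; exact: H. Qed.

Lemma Dsqrt f df s : 0 < f s -> is_derive s (1:R) f df ->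
  is_derive s (1:R) (fun t => Num.sqrt (f t)) ((2 * Num.sqrt (f s))^-1 * df).
Proof. by move=> h0 hf; have H := @is_derive1_comp R Num.sqrt f s _ _ (is_derive1_sqrt h0) hf; exact: H. Qed.

Lemma Dval f d1 d2 s : is_derive s (1:R) f d1 -> is_derive s (1:R) f d2 -> d1 = d2.
Proof. by move=> [_ <-] [_ <-]. Qed.

Lemma Dder f s : derivable f s 1 -> is_derive s (1:R) f ('D_1 f s).
Proof. exact: derivableP. Qed.

Lemma Dcont f s : derivable f s 1 -> {for s, continuous f}.
Proof. by move=> d; apply/differentiable_continuous/derivable1_diffP. Qed.

End Calc.

Section On.
Variable R : realType.
Variable I : set R.
Hypothesis Iint : is_interval I.
Hypothesis Io : open I.

Lemma open_near s : I s -> \forall t \near s, I t.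
Proof. by move=> Is; exact: (open_nbhs_nbhs (conj Io Is)). Qed.

Lemma deriv_eq_on {V : normedModType R} (f g : R -> V) d s : I s -> (forall t, I t -> f t = g t) ->
  is_derive s (1:R) f d -> is_derive s (1:R) g d.
Proof.
move=> Is fg; apply: near_eq_is_derive.
near=> t; apply: fg; near: t; exact: open_near.
Unshelve. all: by end_near. Qed.

Lemma cst_on (f : R -> R) : (forall s, I s -> is_derive s (1:R) f 0) ->
  forall x y, I x -> I y -> f x = f y.
Proof.
move=> hd.
suff W : forall x y, x <= y -> I x -> I y -> f x = f y.
  move=> x y Ix Iy; case: (leP x y) => h; first exact: W.
  by apply/esym/W => //; exact: ltW.
move=> x y xy Ix Iy.
have sub : forall z, z \in `[x, y] -> I z.
  move=> z; rewrite in_itv /= => /andP[h1 h2]; idtac; have := Iint; rewrite /is_interval; move=> II; exact: (II _ _ Ix Iy z (introT andP (conj h1 h2))).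
have h1 : forall z, z \in `]x, y[ -> is_derive z (1:R) f ((fun _ => (0:R)) z).
  move=> z zin /=; apply: hd; apply: sub; move: zin; rewrite !in_itv /= => /andP[a b].
  by rewrite !ltW.
have h2 : {within `[x, y], continuous f}.
  apply: derivable_within_continuous => z zin; have [] := hd z (sub z zin); by [].
have [z _] := MVT_segment xy h1 h2.
by move/eqP; rewrite mul0r subr_eq0 => /eqP.
Qed.

Lemma sign_const (f : R -> R) : (forall s, I s -> derivable f s 1) -> (forall s, I s -> f s != 0) ->
  forall x y, I x -> I y -> 0 < f x -> 0 < f y.
Proof.
move=> hd hn x y Ix Iy fx; rewrite lt_neqAle eq_sym hn //=.
rewrite leNgt; apply/negP => fy.
have [a [b [ab Ia Ib H]]] : exists a b, [/\ a <= b, I a, I b & Num.min (f a) (f b) <= 0 <= Num.max (f a) (f b)].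
  case: (leP x y) => h.
  - exists x, y; split => //; rewrite ge_min le_max; apply/andP; split; apply/orP.
      by right; exact: ltW.
    by left; exact: ltW.
  - exists y, x; split => //; first exact: ltW.
    rewrite ge_min le_max; apply/andP; split; apply/orP.
      by left; exact: ltW.
    by right; exact: ltW.
have sub : forall z, z \in `[a, b] -> I z.
  move=> z; rewrite in_itv /= => /andP[h1 h2]; have := Iint; rewrite /is_interval; move=> II; exact: (II _ _ Ia Ib z (introT andP (conj h1 h2))).
have [z zin fz] := IVT ab (derivable_within_continuous (fun z zi => hd z (sub z zi))) H.
by move: (hn z (sub z zin)); rewrite fz eqxx.
Qed.

End On.

Lemma zero_isolated (R : realType) (h : R -> R) x : {for x, continuous h} ->
  (\forall t \near x^', h t = 0) -> h x = 0.
Proof.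
move=> hc hn.
have L1 : h @ x^' --> h x by apply/continuous_withinNx.
have L2 : h @ x^' --> (0:R).
  by apply: cvg_near_cst.
have PF : ProperFilter (h @ x^') by apply: fmap_proper_filter.
have E := @cvg_unique _ (@Rhausdorff R) _ PF (h x) 0 L1 L2.
exact E.
Qed.
Arguments DC {R}.
Arguments DI {R}.



Section Rot.
Variable R : realType.

Lemma Dlin (k c s : R) : is_derive s (1:R) (fun t => k * t + c) k.
Proof.
apply: (is_derive_eq (DD (DM (DC k s) (DI s)) (DC c s))); ring.
Qed.

Lemma rot_sol (I : set R) (Iint : is_interval I) (Io : open I) (k : R) (g h : R -> R) s0 :
  I s0 ->
  (forall s, I s -> is_derive s (1:R) g (k * h s)) ->
  (forall s, I s -> is_derive s (1:R) h (- (k * g s))) ->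
  exists A B : R, forall s, I s ->
    g s = A * sin (k * s + 0) + B * cos (k * s + 0) /\ h s = A * cos (k * s + 0) - B * sin (k * s + 0).
Proof.
move=> Is0 hg hh.
pose A := g s0 * sin (k * s0 + 0) + h s0 * cos (k * s0 + 0).
pose B := g s0 * cos (k * s0 + 0) - h s0 * sin (k * s0 + 0).
exists A, B.
pose u t := g t - (A * sin (k * t + 0) + B * cos (k * t + 0)).
pose w t := h t - (A * cos (k * t + 0) - B * sin (k * t + 0)).
have du t : I t -> is_derive t (1:R) u (k * w t).
  move=> It; apply: (is_derive_eq (DB (hg t It) (DD (DM (DC A t) (Dsin (Dlin k 0 t))) (DM (DC B t) (Dcos (Dlin k 0 t)))))).
  rewrite /w; ring.
have dw t : I t -> is_derive t (1:R) w (- (k * u t)).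
  move=> It; apply: (is_derive_eq (DB (hh t It) (DB (DM (DC A t) (Dcos (Dlin k 0 t))) (DM (DC B t) (Dsin (Dlin k 0 t)))))).
  rewrite /u; ring.
pose E t := u t * u t + w t * w t.
have dE t : I t -> is_derive t (1:R) E 0.
  move=> It; apply: (is_derive_eq (DD (DM (du t It) (du t It)) (DM (dw t It) (dw t It)))).
  ring.
have e := cos2Dsin2 (k * s0 + 0).
have u0 : u s0 = 0.
  rewrite /u /A /B.
  have -> : forall a b S C : R, a - ((a * S + b * C) * S + (a * C - b * S) * C) = a * (1 - (C ^+ 2 + S ^+ 2)) by move=> *; ring.
  by rewrite e subrr mulr0.
have w0 : w s0 = 0.
  rewrite /w /A /B.
  have -> : forall a b S C : R, b - ((a * S + b * C) * C - (a * C - b * S) * S) = b * (1 - (C ^+ 2 + S ^+ 2)) by move=> *; ring.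
  by rewrite e subrr mulr0.
move=> s Is.
have Es : E s = 0 by rewrite (cst_on Iint dE Is Is0) /E u0 w0; ring.
have us : u s = 0 by move: Es; rewrite /E => Es; nra.
have ws : w s = 0 by move: Es; rewrite /E => Es; nra.
move: us ws; rewrite /u /w => us ws; split; lra.
Qed.

Lemma phase (A B : R) : exists C phi : R, forall t, A * sin t + B * cos t = C * sin (t + phi).
Proof.
case: (eqVneq A 0) => [->|hA].
  by exists B, (pi / 2) => t; rewrite sinDpihalf; ring.
have [hb ht] := atan_def (B / A).
have hc : 0 < cos (atan (B / A)) by apply: cos_gt0_pihalf.
have hc0 : cos (atan (B / A)) != 0 by rewrite gt_eqF.
exists (A / cos (atan (B / A))), (atan (B / A)) => t.
have hs : sin (atan (B / A)) = B / A * cos (atan (B / A)).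
  move: ht hc0; set phi := atan (B / A); rewrite /tan => ht hc0.
  by rewrite -ht divfK.
rewrite sinD hs; field; exact/andP.
Qed.

End Rot.



Section Frame.
Variable R : realType.

Lemma mx_is_derive (f : R -> 'rV[R]_4) (df : 'rV[R]_4) (s : R) :
  (forall i, is_derive s (1:R) (fun t => f t ord0 i) (df ord0 i)) -> is_derive s (1:R) f df.
Proof.
move=> h.
have d : derivable f s 1.
  by apply/derivable_mxP => i j; rewrite (ord1 i); have [] := h j.
apply: DeriveDef => //.
rewrite derive_mx //; apply/matrixP => i j; rewrite mxE (ord1 i).
by have [_ ->] := h j.
Qed.

Lemma mulmx_is_derive (f : R -> 'rV[R]_4) (df : 'rV[R]_4) (Q : 'M[R]_4) b s :
  is_derive s (1:R) f df -> is_derive s (1:R) (fun t => f t *m Q + b) (df *m Q).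
Proof.
move=> hf; apply: mx_is_derive => j.
have -> : (fun t => (f t *m Q + b) ord0 j) =
   (fun t => (\sum_(i < 4) (fun t => f t ord0 i * Q i j)) t + b ord0 j).
  by apply: funext => t; rewrite !mxE fct_sumE; congr (_ + _); apply: eq_bigr => i _; rewrite mxE.
apply: (is_derive_eq (DD (is_derive_sum (fun i => DM (comp_is_derive i hf) (DC (Q i j) s))) (DC (b ord0 j) s))).
by rewrite addr0 !mxE; apply: eq_bigr => i _; ring.
Qed.

Lemma VB (f : R -> 'rV[R]_4) (df : 'rV[R]_4) (p : 'rV[R]_4) s :
  is_derive s (1:R) f df -> is_derive s (1:R) (fun t => f t - p) df.
Proof.
move=> hf.
have H : is_derive s (1:R) (fun t => f t - p) (df - 0) := is_deriveB hf (is_derive_cst p s 1).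
by rewrite subr0 in H.
Qed.

Definition SYS (I : set R) (k1 k2 k3 : R -> R) (c : R) (g2 g3 : R -> R) :=
  forall s, I s -> (s + c) * k1 s = k2 s * g2 s /\ is_derive s (1:R) g2 (k3 s * g3 s)
     /\ is_derive s (1:R) g3 (- (k3 s * g2 s)).

Lemma rect_sys (I : set R) alpha T N B1 B2 k1 k2 k3 p :
  open_interval I -> frenet_frame I alpha T N B1 B2 k1 k2 k3 ->
  (forall s, I s -> dot4 (alpha s - p) (N s) = 0) ->
  exists c g2 g3, SYS I k1 k2 k3 c g2 g3.
Proof.
move=> [Io Iint [s0 Is0]] F hp.
pose x t := alpha t - p.
pose G1 t := dot4 (x t) (T t).
pose GN t := dot4 (x t) (N t).
pose G2 t := dot4 (x t) (B1 t).
pose G3 t := dot4 (x t) (B2 t).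
have dx s : I s -> is_derive s (1:R) x (T s).
  by move=> Is; have [[da _] _] := F s Is; exact: VB.
have dGN s : I s -> is_derive s (1:R) GN (k2 s * G2 s - k1 s * G1 s).
  move=> Is; have [[_ [_ [dN _]]] [[TT [NN [B1B1 [B2B2 [TN [TB1 [TB2 [NB1 [NB2 B1B2]]]]]]]]] _]] := F s Is.
  apply: (is_derive_eq (dot4_is_derive (dx s Is) dN)).
  by rewrite dot4Dr !dot4Zr TN /G1 /G2; ring.
have GN0 s : I s -> k2 s * G2 s - k1 s * G1 s = 0.
  move=> Is; apply: (Dval (dGN s Is)).
  have fg : forall t, I t -> (fun _ => 0 : R) t = GN t by move=> t It; rewrite /GN hp.
  exact: (deriv_eq_on Io Is fg (DC 0 s)).
have dG1 s : I s -> is_derive s (1:R) (fun t => G1 t - t) 0.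
  move=> Is; have [[_ [dT _]] [[TT _] _]] := F s Is.
  apply: (is_derive_eq (DB (dot4_is_derive (dx s Is) dT) (DI s))).
  by rewrite dot4Zr TT /GN hp // mulr0 addr0 subrr.
pose c := G1 s0 - s0.
have G1E s : I s -> G1 s = s + c.
  by move=> Is; have := cst_on Iint dG1 Is Is0; rewrite /c => <-; ring.
exists c, G2, G3 => s Is; split; last split.
- by have := GN0 s Is; rewrite -G1E //; lra.
- have [[_ [_ [_ [dB1 _]]]] [[TT [NN [B1B1 [B2B2 [TN [TB1 [TB2 [NB1 [NB2 B1B2]]]]]]]]] _]] := F s Is.
  apply: (is_derive_eq (dot4_is_derive (dx s Is) dB1)).
  by rewrite dot4Dr !dot4Zr TB1 (hp s Is) /G3; ring.
- have [[_ [_ [_ [_ dB2]]]] [[TT [NN [B1B1 [B2B2 [TN [TB1 [TB2 [NB1 [NB2 B1B2]]]]]]]]] _]] := F s Is.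
  apply: (is_derive_eq (dot4_is_derive (dx s Is) dB2)).
  by rewrite !dot4Zr TB2 /G2; ring.
Qed.


Lemma sys_rect (I : set R) alpha T N B1 B2 k1 k2 k3 c g2 g3 :
  open_interval I -> frenet_frame I alpha T N B1 B2 k1 k2 k3 ->
  SYS I k1 k2 k3 c g2 g3 ->
  exists p, forall s, I s -> dot4 (alpha s - p) (N s) = 0.
Proof.
move=> [Io Iint [s0 Is0]] F S.
pose P i t := alpha t ord0 i - ((t + c) * T t ord0 i + g2 t * B1 t ord0 i + g3 t * B2 t ord0 i).
have dP i s : I s -> is_derive s (1:R) (P i) 0.
  move=> Is.
  have [[da [dT [dN [dB1 dB2]]]] [_ [[k1p k2p] _]]] := F s Is.
  have [e [dg2 dg3]] := S s Is.
  apply: (is_derive_eq (DB (comp_is_derive i da) (DD (DD (DM (DD (DI s) (DC c s)) (comp_is_derive i dT)) (DM dg2 (comp_is_derive i dB1))) (DM dg3 (comp_is_derive i dB2))))).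
  rewrite !mxE.
  have -> : g2 s = (s + c) * k1 s / k2 s by rewrite e; field; rewrite gt_eqF.
  by field; rewrite gt_eqF.
exists (\row_i P i s0) => s Is.
have E : alpha s - \row_i P i s0 = (s + c) *: T s + g2 s *: B1 s + g3 s *: B2 s.
  apply/rowP => i; rewrite !mxE.
  rewrite -(cst_on Iint (dP i) Is Is0) /P; ring.
have [_ [[TT [NN [B1B1 [B2B2 [TN [TB1 [TB2 [NB1 [NB2 B1B2]]]]]]]]] _]] := F s Is.
rewrite E !dot4Dl !dot4Zl TN (dot4C (B1 s)) NB1 (dot4C (B2 s)) NB2; ring.
Qed.

Lemma cong_rect (I : set R) alpha T N B1 B2 k1 k2 k3 beta :
  open_interval I -> frenet_frame I alpha T N B1 B2 k1 k2 k3 ->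
  congruent I alpha beta -> rectifying I beta ->
  exists p, forall s, I s -> dot4 (alpha s - p) (N s) = 0.
Proof.
move=> [Io Iint I0] F [Q [b [HQ Hb]]] [T' [N' [B1' [B2' [k1' [k2' [k3' [F' [p hp]]]]]]]]].
have HQ' : Q^T *m Q = 1%:M by apply: mulmx1C.
have ET s : I s -> T' s = T s *m Q.
  move=> Is; have [[da _] _] := F s Is; have [[da' _] _] := F' s Is.
  have h := mulmx_is_derive Q b da.
  have fg : forall t, I t -> alpha t *m Q + b = beta t by move=> t It; rewrite Hb.
  by move: da' (deriv_eq_on Io Is fg h) => [_ <-] [_ <-].
have EN s : I s -> N' s = N s *m Q.
  move=> Is; have [[_ [dT _]] [[_ [NN _]] [[k1p _] _]]] := F s Is.
  have [[_ [dT' _]] [[_ [NN' _]] [[k1p' _] _]]] := F' s Is.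
  have h := mulmx_is_derive Q 0 dT.
  have fg : forall t, I t -> T t *m Q + 0 = T' t by move=> t It; rewrite ET // addr0.
  have e : k1' s *: N' s = (k1 s *: N s) *m Q by move: dT' (deriv_eq_on Io Is fg h) => [_ <-] [_ <-].
  rewrite -scalemxAl in e.
  have e2 : k1' s * k1' s = k1 s * k1 s.
    have := congr1 (fun v => dot4 v v) e => /=.
    by rewrite !dot4Zl !dot4Zr NN' dot4_orth // NN !mulr1.
  have ek : k1' s = k1 s by nra.
  rewrite ek in e.
  have := congr1 (fun v => (k1 s)^-1 *: v) e => /=.
  by rewrite !scalerA mulVf ?gt_eqF // !scale1r.
exists ((p - b) *m Q^T) => s Is.
have := hp s Is.
rewrite Hb // EN //.
have -> : alpha s *m Q + b - p = (alpha s - (p - b) *m Q^T) *m Q.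
  by rewrite mulmxBl -mulmxA HQ' mulmx1 opprB addrA.
by rewrite dot4_orth.
Qed.

End Frame.



Section Cases.
Variable R : realType.

Lemma other_point (I : set R) (c : R) : open_interval I -> exists s, I s /\ s != c.
Proof.
move=> [Io Iint [s0 Is0]].
case: (eqVneq s0 c) => [e|ne]; last by exists s0.
have H : \forall t \near s0^', I t /\ t != s0.
  near=> t; split.
    by near: t; apply: nbhs_dnbhs; exact: open_near.
  by near: t; exact: nbhs_dnbhs_neq.
have [t [It tn]] := @filter_ex _ _ (Proper_dnbhs_numFieldType s0) _ H.
by exists t; rewrite -e.
Unshelve. all: by end_near. Qed.

Lemma fwd_i (I : set R) alpha T N B1 B2 k1 k2 k3 (a b c : R) g2 g3 :
  open_interval I -> frenet_frame I alpha T N B1 B2 k1 k2 k3 ->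
  (forall s, I s -> k1 s = a /\ k2 s = b) ->
  SYS I k1 k2 k3 c g2 g3 ->
  exists (a b c c1 e : R), 0 < a /\ 0 < b /\ (e = 1 \/ e = -1) /\
      forall s, I s ->
        [/\ k1 s = a, k2 s = b, 0 < - s ^+ 2 - 2 * c * s + c1
          & k3 s = e / Num.sqrt (- s ^+ 2 - 2 * c * s + c1)].
Proof.
move=> [Io Iint [s0 Is0]] F H1 S.
have [_ [_ [[k1p k2p] _]]] := F s0 Is0.
have [ea eb] := H1 s0 Is0.
have a0 : 0 < a by rewrite -ea.
have b0 : 0 < b by rewrite -eb.
pose m := a / b.
have m0 : 0 < m by rewrite divr_gt0.
have g2E s : I s -> g2 s = m * s + m * c.
  move=> Is; have [e _] := S s Is; have [e1 e2] := H1 s Is.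
  move: e; rewrite e1 e2 /m => e.
  have -> : g2 s = b * g2 s / b by field; rewrite gt_eqF.
  by rewrite -e; field; rewrite gt_eqF.
have k3g3 s : I s -> k3 s * g3 s = m.
  move=> Is; have [_ [dg2 _]] := S s Is.
  have fg : forall t, I t -> m * t + m * c = g2 t by move=> t It; rewrite g2E.
  exact: (Dval dg2 (deriv_eq_on Io Is fg (Dlin m (m * c) s))).
have g3n s : I s -> g3 s != 0.
  by move=> Is; apply/eqP => e; have := k3g3 s Is; rewrite e mulr0 => e'; move: m0; rewrite -e' ltxx.
pose E t := g3 t * g3 t + (m * t + m * c) * (m * t + m * c).
have dE s : I s -> is_derive s (1:R) E 0.
  move=> Is; have [_ [_ dg3]] := S s Is.
  apply: (is_derive_eq (DD (DM dg3 dg3) (DM (Dlin m (m * c) s) (Dlin m (m * c) s)))).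
  have -> : k3 s = m / g3 s by rewrite -(k3g3 s Is); field; exact: g3n.
  rewrite g2E //; field; exact: g3n.
pose K := E s0.
pose c1 := K / (m * m) - c * c.
have QE s : I s -> - s ^+ 2 - 2 * c * s + c1 = (g3 s / m) ^+ 2.
  move=> Is; have Es : E s = K := cst_on Iint dE Is Is0.
  rewrite /c1 -Es /E; field; idtac. 
  by rewrite gt_eqF.
have Qp s : I s -> 0 < - s ^+ 2 - 2 * c * s + c1.
  move=> Is; rewrite QE // exprn_even_gt0 //=; apply: mulf_neq0; [exact: g3n | by rewrite invr_eq0 gt_eqF].
have dg3 s : I s -> derivable g3 s 1 by move=> Is; have [_ [_ []]] := S s Is.
exists a, b, c, c1, (if 0 < g3 s0 then 1 else -1); split => //; split => //.
split; first by case: ifP => _; [left|right].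
move=> s Is; have [e1 e2] := H1 s Is; split => //; first exact: Qp.
have kE : k3 s = m / g3 s by rewrite -(k3g3 s Is); field; exact: g3n.
rewrite QE // sqrtr_sqr kE.
case: ifP => hs.
- have gs : 0 < g3 s := sign_const Iint dg3 g3n Is0 Is hs.
  rewrite ger0_norm; last by rewrite divr_ge0 // ltW.
  by field; rewrite ?(gt_eqF gs) ?(gt_eqF m0).
- have hs' : 0 < - g3 s0.
    by rewrite oppr_gt0 lt_neqAle g3n //= leNgt hs.
  have dn t : I t -> derivable (fun t => - g3 t) t 1.
    by move=> It; have [] := DB (DC 0 t) (derivableP (dg3 t It)); rewrite /=; move=> d _; move: d; apply: near_eq_derivable; near=> y; rewrite sub0r.
  have nn t : I t -> - g3 t != 0 by move=> It; rewrite oppr_eq0 g3n.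
  have gs : 0 < - g3 s := sign_const Iint dn nn Is0 Is hs'.
  rewrite ltr0_norm; last by rewrite pmulr_llt0 ?invr_gt0 // -oppr_gt0.
  by field; rewrite (gt_eqF m0) (g3n s Is).
Unshelve. all: by end_near. Qed.


Lemma DQ (c c1 s : R) : is_derive s (1:R) (fun t => - t ^+ 2 - 2 * c * t + c1) (- 2 * s - 2 * c).
Proof.
have -> : (fun t : R => - t ^+ 2 - 2 * c * t + c1) = (fun t => (0 - t * t) - ((2 * c) * t + 0) + c1).
  by apply: funext => t; ring.
by apply: (is_derive_eq (DD (DB (DB (DC 0 s) (DM (DI s) (DI s))) (Dlin (2 * c) 0 s)) (DC c1 s))); ring.
Qed.

Lemma bwd_i (I : set R) (k1 k2 k3 : R -> R) :
  (exists (a b c c1 e : R), 0 < a /\ 0 < b /\ (e = 1 \/ e = -1) /\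
      forall s, I s ->
        [/\ k1 s = a, k2 s = b, 0 < - s ^+ 2 - 2 * c * s + c1
          & k3 s = e / Num.sqrt (- s ^+ 2 - 2 * c * s + c1)]) ->
  exists c g2 g3, SYS I k1 k2 k3 c g2 g3.
Proof.
move=> [a [b [c [c1 [e [a0 [b0 [he H]]]]]]]].
pose m := a / b.
exists c, (fun t => m * t + m * c), (fun t => m * e * Num.sqrt (- t ^+ 2 - 2 * c * t + c1)).
move=> s Is; have [e1 e2 Qp e3] := H s Is.
have sq0 : 0 < Num.sqrt (- s ^+ 2 - 2 * c * s + c1) by rewrite sqrtr_gt0.
have ee : e * e = 1 by case: he => ->; ring.
split; [|split].
- by rewrite e1 e2 /m; field; rewrite gt_eqF.
- apply: (is_derive_eq (Dlin m (m * c) s)).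
  rewrite e3.
  have -> : e / Num.sqrt (- s ^+ 2 - 2 * c * s + c1) * (m * e * Num.sqrt (- s ^+ 2 - 2 * c * s + c1)) = m * (e * e).
    by field; rewrite gt_eqF.
  by rewrite ee mulr1.
- apply: (is_derive_eq (DM (DC (m * e) s) (Dsqrt (f := fun t => - t ^+ 2 - 2 * c * t + c1) Qp (DQ c c1 s)))).
  by rewrite e3; field; rewrite gt_eqF.
Qed.

Lemma bwd_ii (I : set R) alpha T N B1 B2 k1 k2 k3 :
  open_interval I -> frenet_frame I alpha T N B1 B2 k1 k2 k3 ->
  (exists (b k c c1 c2 : R), 0 < b /\ k != 0 /\ c1 != 0 /\
      forall s, I s ->
        [/\ k2 s = b, k3 s = k
          & s + c != 0 -> k1 s = c1 * sin (k * s + c2) / (s + c)]) ->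
  exists c g2 g3, SYS I k1 k2 k3 c g2 g3.
Proof.
move=> [Io Iint I0] F [b [k [c [c1 [c2 [b0 [k0 [c10 H]]]]]]]].
exists c, (fun t => c1 / b * sin (k * t + c2)), (fun t => c1 / b * cos (k * t + c2)).
have key s : I s -> (s + c) * k1 s = c1 * sin (k * s + c2).
  move=> Is.
  case: (eqVneq (s + c) 0) => hs; last first.
    by have [_ _ h] := H s Is; rewrite h //; field.
  pose h t := (t + c) * k1 t - c1 * sin (k * t + c2).
  suff : h s = 0 by rewrite /h => /eqP; rewrite subr_eq0 => /eqP.
  apply: zero_isolated.
    have [_ [_ [_ [dk1 _]]]] := F s Is.
    have [d _] := DB (DM (DD (DI s) (DC c s)) (Dder dk1)) (DM (DC c1 s) (Dsin (Dlin k c2 s))).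
    exact: Dcont d.
  near=> t.
  have It : I t by near: t; apply: nbhs_dnbhs; exact: open_near.
  have tn : t != s by near: t; exact: nbhs_dnbhs_neq.
  have tc : t + c != 0.
    apply: contra tn => /eqP e'; apply/eqP; move/eqP: hs => hs; lra.
  have [_ _ hh] := H t It.
  by rewrite /h (hh tc); field.
move=> s Is; have [e2 e3 _] := H s Is.
split; [|split].
- by rewrite key // e2; field; rewrite gt_eqF.
- by apply: (is_derive_eq (DM (DC (c1 / b) s) (Dsin (Dlin k c2 s)))); rewrite e3; ring.
- by apply: (is_derive_eq (DM (DC (c1 / b) s) (Dcos (Dlin k c2 s)))); rewrite e3; ring.
Unshelve. all: by end_near. Qed.

Lemma sin_nz (u : R) : u != 0 -> `|u| < pi -> sin u != 0.
Proof.
move=> u0 up.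
case: (ltP 0 u) => h.
  by rewrite gt_eqF // sin_gt0_pi // h /= -(gtr0_norm h).
have hu : u < 0 by rewrite lt_neqAle u0 h.
have : 0 < sin (- u).
  by apply: sin_gt0_pi; rewrite oppr_gt0 hu /= -(ltr0_norm hu).
by rewrite sinN oppr_gt0 => /lt_eqF ->.
Qed.

Lemma bwd_iii (I : set R) alpha T N B1 B2 k1 k2 k3 :
  open_interval I -> frenet_frame I alpha T N B1 B2 k1 k2 k3 ->
  (exists (a k c c1 c2 : R), 0 < a /\ k != 0 /\ c2 != 0 /\
      forall s, I s ->
        [/\ k1 s = a, k3 s = k
          & cos (k * s + c1) != 0 -> k2 s = c2 * (s + c) / cos (k * s + c1)]) ->
  exists c g2 g3, SYS I k1 k2 k3 c g2 g3.
Proof.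
move=> [Io Iint I0] F [a [k [c [c1 [c2 [a0 [k0 [c20 H]]]]]]]].
exists c, (fun t => a / c2 * cos (k * t + c1)), (fun t => - (a / c2) * sin (k * t + c1)).
have key s : I s -> k2 s * cos (k * s + c1) = c2 * (s + c).
  move=> Is.
  case: (eqVneq (cos (k * s + c1)) 0) => hs; last first.
    by have [_ _ h] := H s Is; rewrite h //; field.
  pose h t := k2 t * cos (k * t + c1) - c2 * (t + c).
  suff : h s = 0 by rewrite /h => /eqP; rewrite subr_eq0 => /eqP.
  have sn : sin (k * s + c1) != 0.
    apply/eqP => e; have := cos2Dsin2 (k * s + c1); rewrite hs e expr0n /= addr0 => /eqP.
    by rewrite eq_sym oner_eq0.
  have kp : 0 < `|k| by rewrite normr_gt0.
  have ep : 0 < pi / `|k| by rewrite divr_gt0 // pi_gt0.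
  have hb : \forall t \near s, `|s - t| < pi / `|k|.
    have := @near_ball _ _ s (pi / `|k|) ep.
    by apply: filterS => y; rewrite -ball_normE /ball_ /=.
  apply: zero_isolated.
    have [_ [_ [_ [_ [dk2 _]]]]] := F s Is.
    have [d _] := DB (DM (Dder dk2) (Dcos (Dlin k c1 s))) (DM (DC c2 s) (DD (DI s) (DC c s))).
    exact: Dcont d.
  near=> t.
  have It : I t by near: t; apply: nbhs_dnbhs; exact: open_near.
  have tn : t != s by near: t; exact: nbhs_dnbhs_neq.
  have tb : `|s - t| < pi / `|k|.
    by near: t; apply: nbhs_dnbhs; exact: hb.
  have cn : cos (k * t + c1) != 0.
    have -> : k * t + c1 = (k * s + c1) + k * (t - s) by ring.
    rewrite cosD hs mul0r sub0r oppr_eq0 mulf_neq0 //.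
    apply: sin_nz; first by rewrite mulf_neq0 // subr_eq0.
    rewrite normrM distrC.
    by rewrite -ltr_pdivlMl // mulrC.
  have [_ _ hh] := H t It.
  by rewrite /h (hh cn); field.
move=> s Is; have [e1 e3 _] := H s Is.
split; [|split].
- by rewrite e1 mulrCA (key s Is); field.
- by apply: (is_derive_eq (DM (DC (a / c2) s) (Dcos (Dlin k c1 s)))); rewrite e3; ring.
- by apply: (is_derive_eq (DM (DC (- (a / c2)) s) (Dsin (Dlin k c1 s)))); rewrite e3; ring.
Unshelve. all: by end_near. Qed.


Lemma sys_rot (I : set R) alpha T N B1 B2 k1 k2 k3 (k : R) c g2 g3 :
  open_interval I -> frenet_frame I alpha T N B1 B2 k1 k2 k3 ->
  (forall s, I s -> k3 s = k) ->
  SYS I k1 k2 k3 c g2 g3 ->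
  exists C phi : R, C != 0 /\ forall s, I s -> g2 s = C * sin (k * s + phi).
Proof.
move=> OI F H S; have [Io Iint [s0 Is0]] := OI.
have hg s : I s -> is_derive s (1:R) g2 (k * g3 s).
  by move=> Is; have [_ [d _]] := S s Is; rewrite (H s Is) in d.
have hh s : I s -> is_derive s (1:R) g3 (- (k * g2 s)).
  by move=> Is; have [_ [_ d]] := S s Is; rewrite (H s Is) in d.
have [A [B AB]] := rot_sol Iint Io Is0 hg hh.
have [C [phi P]] := phase A B.
have gE s : I s -> g2 s = C * sin (k * s + phi).
  by move=> Is; have [-> _] := AB s Is; rewrite P addr0.
exists C, phi; split => //.
apply/eqP => C0.
have [s1 [Is1 s1n]] := other_point (- c) OI.
have [e _] := S s1 Is1.
have [_ [_ [[k1p _] _]]] := F s1 Is1.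
move: e; rewrite gE // C0 mul0r mulr0 => /eqP; rewrite mulf_eq0 (gt_eqF k1p) orbF.
by rewrite addr_eq0 (negbTE s1n).
Qed.

Lemma fwd_ii (I : set R) alpha T N B1 B2 k1 k2 k3 (b k : R) c g2 g3 :
  open_interval I -> frenet_frame I alpha T N B1 B2 k1 k2 k3 ->
  (exists s0, I s0 /\ k3 s0 != 0) ->
  (forall s, I s -> k2 s = b /\ k3 s = k) ->
  SYS I k1 k2 k3 c g2 g3 ->
  (exists (b k c c1 c2 : R), 0 < b /\ k != 0 /\ c1 != 0 /\
      forall s, I s ->
        [/\ k2 s = b, k3 s = k
          & s + c != 0 -> k1 s = c1 * sin (k * s + c2) / (s + c)]).
Proof.
move=> OI F [s0 [Is0 k30]] H S.
have [C [phi [C0 gE]]] := sys_rot OI F (fun s Is => proj2 (H s Is)) S.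
have [eb ek] := H s0 Is0.
have [_ [_ [[_ k2p] _]]] := F s0 Is0.
exists b, k, c, (b * C), phi; split; first by rewrite -eb.
split; first by rewrite -ek.
split; first by rewrite mulf_neq0 // gt_eqF // -eb.
move=> s Is; have [e2 e3] := H s Is; split => // sc.
have [e _] := S s Is.
move: e; rewrite e2 gE // => e.
have -> : k1 s = (s + c) * k1 s / (s + c) by field.
by rewrite e; field.
Qed.

Lemma fwd_iii (I : set R) alpha T N B1 B2 k1 k2 k3 (a k : R) c g2 g3 :
  open_interval I -> frenet_frame I alpha T N B1 B2 k1 k2 k3 ->
  (exists s0, I s0 /\ k3 s0 != 0) ->
  (forall s, I s -> k1 s = a /\ k3 s = k) ->
  SYS I k1 k2 k3 c g2 g3 ->
  (exists (a k c c1 c2 : R), 0 < a /\ k != 0 /\ c2 != 0 /\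
      forall s, I s ->
        [/\ k1 s = a, k3 s = k
          & cos (k * s + c1) != 0 -> k2 s = c2 * (s + c) / cos (k * s + c1)]).
Proof.
move=> OI F [s0 [Is0 k30]] H S.
have [C [phi [C0 gE]]] := sys_rot OI F (fun s Is => proj2 (H s Is)) S.
have [ea ek] := H s0 Is0.
have [_ [_ [[k1p _] _]]] := F s0 Is0.
have a0 : 0 < a by rewrite -ea.
exists a, k, c, (phi - pi / 2), (a / C); split => //.
split; first by rewrite -ek.
split; first by rewrite mulf_neq0 // ?invr_eq0 // gt_eqF.
move=> s Is; have [e1 e3] := H s Is; split => // cn.
have [e _] := S s Is.
have ec : cos (k * s + (phi - pi / 2)) = sin (k * s + phi) by rewrite addrA cosBpihalf.
move: e cn; rewrite e1 gE // ec => e cn.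
have -> : k2 s = k2 s * (C * sin (k * s + phi)) / (C * sin (k * s + phi)) by field; rewrite C0 cn.
by rewrite -e; field; rewrite C0 cn.
Qed.

End Cases.

Unset Implicit Arguments.

Theorem theorem3p3 (R : realType) (I : set R)
    (alpha T N B1 B2 : R -> 'rV[R]_4) (k1 k2 k3 : R -> R) :
  open_interval I ->
  frenet_frame I alpha T N B1 B2 k1 k2 k3 ->
  (* non-zero curvatures (k1, k2 > 0 are part of the frame) *)
  (exists s0, I s0 /\ k3 s0 != 0) ->
  (* two of the curvatures are constant *)
  ((exists a b : R, forall s, I s -> k1 s = a /\ k2 s = b) \/
   (exists a b : R, forall s, I s -> k2 s = a /\ k3 s = b) \/
   (exists a b : R, forall s, I s -> k1 s = a /\ k3 s = b)) ->
  ((exists beta, congruent I alpha beta /\ rectifying I beta) <->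
   (* (i) *)
   (exists (a b c c1 e : R), 0 < a /\ 0 < b /\ (e = 1 \/ e = -1) /\
      forall s, I s ->
        [/\ k1 s = a, k2 s = b, 0 < - s ^+ 2 - 2 * c * s + c1
          & k3 s = e / Num.sqrt (- s ^+ 2 - 2 * c * s + c1)])
   \/
   (* (ii) *)
   (exists (b k c c1 c2 : R), 0 < b /\ k != 0 /\ c1 != 0 /\
      forall s, I s ->
        [/\ k2 s = b, k3 s = k
          & s + c != 0 -> k1 s = c1 * sin (k * s + c2) / (s + c)])
   \/
   (* (iii) *)
   (exists (a k c c1 c2 : R), 0 < a /\ k != 0 /\ c2 != 0 /\
      forall s, I s ->
        [/\ k1 s = a, k3 s = k
          & cos (k * s + c1) != 0 -> k2 s = c2 * (s + c) / cos (k * s + c1)])).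
Proof.
move=> OI F hk3 H.
have EQ : (exists beta, congruent I alpha beta /\ rectifying I beta) <->
          exists c g2 g3, SYS I k1 k2 k3 c g2 g3.
  split.
  - move=> [beta [Cg Rc]]; have [p hp] := cong_rect OI F Cg Rc.
    exact: rect_sys OI F hp.
  - move=> [c [g2 [g3 S]]]; have [p hp] := sys_rect OI F S.
    exists alpha; split.
      exists 1%:M, 0; split; first by rewrite trmx1 mulmx1.
      by move=> s _; rewrite mulmx1 addr0.
    by exists T, N, B1, B2, k1, k2, k3; split => //; exists p.
rewrite EQ; split.
- move=> [c [g2 [g3 S]]].
  case: H => [[a [b H1]]|[[b [k H2]]|[a [k H3]]]].
  + by left; exact: fwd_i OI F H1 S.
  + by right; left; exact: fwd_ii OI F hk3 H2 S.
  + by right; right; exact: fwd_iii OI F hk3 H3 S.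
- case => [h|[h|h]].
  + exact: bwd_i h.
  + exact: bwd_ii OI F h.
  + exact: bwd_iii OI F h.
Qed.
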